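(* For $v\in\mathbb{R}$ consider the system of ODEs for $(a,b,r,s)(\xi)\in\mathbb{R}^4$: $$\partial_\xi a=r,\qquad \partial_\xi b=s,\qquad \partial_\xi r=-vr-\frac{sa}{2}+\frac{a|r|}{2},\qquad \partial_\xi s=-vs-ra.$$ Consider the boundary conditions (H1) $(a,b,r,s)(-\infty)=(a_0,b_0,0,0)$ and $(a,b,r,s)(+\infty)=(0,2,0,0)$; (H2) $(a,b,r,s)(-\infty)=(0,-2,0,0)$ and $(a,b,r,s)(+\infty)=(a_0,b_0,0,0)$. Then: 1. For every $v>0$ there are exactly two pairs $(a_0,b_0)$ for which there exists a non-constant trajectory satisfying (H1), namely $(a_0,b_0)=(4v,-8v+2)$, for which $r(\xi)<0$ for all $\xi\in\mathbb{R}$ along the trajectory, and $(a_0,b_0)=(-4v,-8v+2)$, for which $r(\xi)>0$ for all $\xi$. Also, for $v>0$ there is no non-constant trajectory satisfying (H2) for any $(a_0,b_0)$. 2. For $v=0$ there is no non-constant trajectory converging to equilibria as $\xi\to\pm\infty$ such that $(a,b,r,s)(-\infty)=(0,b_0,0,0)$ or $(a,b,r,s)(+\infty)=(0,b_0,0,0)$, for any $b_0\in\mathbb{R}$. 3. For every $v<0$ there are exactly two pairs $(a_0,b_0)$ for which there exists a non-constant trajectory satisfying (H2), namely $(a_0,b_0)=(4v,-8v-2)$, with $r(\xi)<0$ for all $\xi$, and $(a_0,b_0)=(-4v,-8v-2)$, with $r(\xi)>0$ for all $\xi$. Also, for $v<0$ there is no non-constant trajectory satisfying (H1) for any $(a_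0,b_0)$.
   Context: A trajectory is a solution $(a,b,r,s):\mathbb{R}\to\mathbb{R}^4$ of the system defined for all $\xi\in\mathbb{R}$; the equilibria of the system are exactly the points with $r=s=0$. *)

(* Defs.v *)
From Stdlib Require Import Reals.
From Coquelicot Require Import Coquelicot.
Open Scope R_scope.

Definition trajectory (v : R) (a b r s : R -> R) : Prop :=
  forall xi : R,
    is_derive a xi (r xi) /\
    is_derive b xi (s xi) /\
    is_derive r xi (- v * r xi - s xi * a xi / 2 + a xi * Rabs (r xi) / 2) /\
    is_derive s xi (- v * s xi - r xi * a xi).

Definition tends_to (a b r s : R -> R) (t : Rbar) (p q : R) : Prop :=
  is_lim a t p /\ is_lim b t q /\ is_lim r t 0 /\ is_lim s t 0.

Definition nonconstant (a b r s : R -> R) : Prop :=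
  exists x y : R, (a x, b x, r x, s x) <> (a y, b y, r y, s y).

Definition H1 (a b r s : R -> R) (a0 b0 : R) : Prop :=
  tends_to a b r s m_infty a0 b0 /\ tends_to a b r s p_infty 0 2.

Definition H2 (a b r s : R -> R) (a0 b0 : R) : Prop :=
  tends_to a b r s m_infty 0 (-2) /\ tends_to a b r s p_infty a0 b0.

(* Main.v *)
Require Import Defs.
From Stdlib Require Import Reals Psatz Lra.
From Coquelicot Require Import Coquelicot.
Open Scope R_scope.
Implicit Types f g : R -> R.
Implicit Types l : R.

Lemma d_plus f g x df dg : is_derive f x df -> is_derive g x dg ->
  is_derive (fun t => f t + g t) x (df + dg).
Proof. intros H1 H2. exact (is_derive_plus f g x df dg H1 H2). Qed.

Lemma d_minus f g x df dg : is_derive f x df -> is_derive g x dg ->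
  is_derive (fun t => f t - g t) x (df - dg).
Proof. intros H1 H2. exact (is_derive_minus f g x df dg H1 H2). Qed.

Lemma d_mult f g x df dg : is_derive f x df -> is_derive g x dg ->
  is_derive (fun t => f t * g t) x (df * g x + f x * dg).
Proof. intros H1 H2. exact (is_derive_mult f g x df dg H1 H2 Rmult_comm). Qed.

Lemma d_scal f x k df : is_derive f x df -> is_derive (fun t => k * f t) x (k * df).
Proof. intros H; exact (is_derive_scal f x k df H). Qed.

Lemma d_const (c x : R) : is_derive (fun _ : R => c) x 0.
Proof. exact (is_derive_const c x). Qed.

Lemma d_eq (f : R -> R) x l l' : is_derive f x l -> l = l' -> is_derive f x l'.
Proof. intros H e; subst; auto. Qed.

Lemma d_ext (f g : R -> R) x l : (forall t : R, f t = g t) -> is_derive f x l -> is_derive g x l.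
Proof. intros H1 H2. exact (is_derive_ext f g x l H1 H2). Qed.

Lemma d_expK K x : is_derive (fun t => exp (K*t)) x (K * exp (K*x)).
Proof. auto_derive; auto; ring. Qed.

Lemma d_refl f x df : is_derive f x df -> is_derive (fun t => f (- t)) (- x) (- df).
Proof.
  intros H.
  assert (H2 : is_derive (fun t => -t) (-x) (-1)).
  { auto_derive; auto. }
  rewrite <- (Ropp_involutive x) in H.
  pose proof (is_derive_comp f (fun t => -t) (-x) df (-1) H H2) as H3.
  simpl in H3. eapply d_eq. exact H3. unfold scal; simpl. unfold mult; simpl. ring.
Qed.

Lemma cont_of_deriv f (df : R -> R) : (forall x, is_derive f x (df x)) -> continuity f.
Proof.
  intros H x. apply continuity_pt_filterlim. apply (ex_derive_continuous (K:=R_AbsRing) (V:=R_NormedModule) f x).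
  exists (df x). apply H.
Qed.

Lemma mono f (df : R -> R) p q : (forall x, is_derive f x (df x)) -> p <= q ->
  (forall x, p <= x <= q -> 0 <= df x) -> f p <= f q.
Proof.
  intros Hd Hpq Hpos.
  destruct (Req_dec p q) as [E|E]. { subst; lra. }
  assert (Hm: Rmin p q = p) by (apply Rmin_left; lra).
  assert (HM: Rmax p q = q) by (apply Rmax_right; lra).
  destruct (MVT_gen f p q df) as [c [Hc Heq]].
  - intros x _. apply Hd.
  - intros x _. apply (cont_of_deriv f df Hd).
  - rewrite Hm, HM in Hc. assert (0 <= df c) by (apply Hpos; lra).
    assert (0 <= df c * (q - p)) by (apply Rmult_le_pos; lra). lra.
Qed.

Lemma mono_dec f (df : R -> R) p q : (forall x, is_derive f x (df x)) -> p <= q ->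
  (forall x, p <= x <= q -> df x <= 0) -> f q <= f p.
Proof.
  intros Hd Hpq Hneg.
  assert (H := mono (fun t => - f t) (fun t => - df t) p q).
  assert (- f p <= - f q). { apply H; auto. intros x. apply (is_derive_opp f x (df x)), Hd.
    intros x Hx. specialize (Hneg x Hx). lra. }
  lra.
Qed.

Lemma const_of_deriv0 f : (forall x, is_derive f x 0) -> forall x y, f x = f y.
Proof.
  intros Hd x y.
  assert (forall p q, p <= q -> f p = f q).
  { intros p q Hpq. apply Rle_antisym.
    - apply (mono f (fun _ => 0)); auto. intros; lra.
    - apply (mono_dec f (fun _ => 0)); auto. intros; lra. }
  destruct (Rle_dec x y). auto. symmetry; apply H; lra.
Qed.

Lemma dsign f x l : is_derive f x l -> 0 < l ->
  exists d, 0 < d /\ forall h, 0 < h < d -> f (x - h) < f x /\ f x < f (x + h).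
Proof.
  intros H Hl. apply is_derive_Reals in H.
  destruct (H (l/2)) as [d Hd]. lra.
  exists d. split. apply cond_pos. intros h Hh. split.
  - assert (A := Hd (-h)). assert (B: -h <> 0) by lra.
    assert (C: Rabs (-h) < d) by (rewrite Rabs_Ropp, Rabs_right; lra).
    specialize (A B C). apply Rabs_def2 in A. destruct A as [A1 A2].
    replace (x - h) with (x + - h) by ring.
    set (q := (f (x + - h) - f x) / - h) in *.
    assert (f (x + -h) - f x = q * (-h)) by (unfold q; field; lra).
    nra.
  - assert (A := Hd h). assert (B: h <> 0) by lra.
    assert (C: Rabs h < d) by (rewrite Rabs_right; lra).
    specialize (A B C). apply Rabs_def2 in A. destruct A as [A1 A2].
    set (q := (f (x + h) - f x) / h) in *.
    assert (f (x + h) - f x = q * h) by (unfold q; field; lra).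
    nra.
Qed.

Lemma cont_pos f x : continuity_pt f x -> 0 < f x ->
  exists d, 0 < d /\ forall y, Rabs (y - x) < d -> 0 < f y.
Proof.
  intros Hc Hp. destruct (Hc (f x) Hp) as [d [Hd H]].
  exists d; split; auto. intros y Hy.
  destruct (Req_dec y x) as [E|E]. { subst; auto. }
  assert (A : R_dist (f y) (f x) < f x).
  { apply H. split. split. constructor. auto. exact Hy. }
  unfold R_dist in A. apply Rabs_def2 in A. lra.
Qed.

Lemma first_zero f p q : continuity f -> p < q -> 0 < f p -> f q <= 0 ->
  exists e, p < e <= q /\ f e = 0 /\ forall t, p <= t < e -> 0 < f t.
Proof.
  intros Hc Hpq Hp Hq.
  set (E := fun t => p <= t /\ forall y, p <= y <= t -> 0 < f y).
  assert (Hb : is_upper_bound E q).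
  { intros t [Ht Hy]. destruct (Rle_dec t q); auto.
    assert (0 < f q) by (apply Hy; lra). lra. }
  assert (Hp' : E p). { split. lra. intros y Hy. replace y with p by lra. auto. }
  destruct (completeness E) as [e [He1 He2]].
  { exists q; auto. } { exists p; auto. }
  assert (Hpe : p <= e) by (apply He1; auto).
  assert (Heq : e <= q) by (apply He2; auto).
  assert (Hpos : forall t, p <= t < e -> 0 < f t).
  { intros t Ht. destruct (Rlt_dec 0 (f t)) as [P|P]; auto. exfalso.
    assert (is_upper_bound E t).
    { intros t' [H1 H2]. destruct (Rle_dec t' t); auto.
      exfalso. apply P. apply H2. lra. }
    assert (e <= t) by (apply He2; auto). lra. }
  assert (Hfe : f e = 0).
  { destruct (Rtotal_order (f e) 0) as [N|[Z|P]]; auto.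
    - exfalso. destruct (cont_pos (fun t => - f t) e) as [d [Hd Hy]].
      { apply continuity_pt_opp, Hc. } { lra. }
      destruct (Req_dec e p) as [Ep|Ep]. { subst; lra. }
      set (y := Rmax p (e - d/2)).
      assert (p <= y) by apply Rmax_l.
      assert (y < e). { unfold y; apply Rmax_lub_lt; lra. }
      assert (e - d/2 <= y) by apply Rmax_r.
      assert (0 < - f y). { apply Hy. rewrite Rabs_left; lra. }
      assert (0 < f y) by (apply Hpos; lra). lra.
    - exfalso. destruct (cont_pos f e) as [d [Hd Hy]]. apply Hc. auto.
      assert (E (e + d/2)).
      { split. lra. intros y Hy'. destruct (Rlt_dec y e). apply Hpos; lra.
        apply Hy. rewrite Rabs_right; lra. }
      assert (e + d/2 <= e) by (apply He1; auto). lra. }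
  exists e. split; [|split]; auto.
  split; auto. destruct (Req_dec e p); [subst; lra| lra].
Qed.

Lemma last_zero f p q : continuity f -> p < q -> f p <= 0 -> 0 < f q ->
  exists e, p <= e < q /\ f e = 0 /\ forall t, e < t <= q -> 0 < f t.
Proof.
  intros Hc Hpq Hp Hq.
  set (g := fun t => f (- t)).
  assert (Hg : continuity g).
  { unfold g. intros x. apply (continuity_pt_comp (fun t => -t) f).
    apply continuity_pt_opp, continuity_pt_id. apply Hc. }
  assert (A1 : 0 < g (-q)) by (unfold g; rewrite Ropp_involutive; auto).
  assert (A2 : g (-p) <= 0) by (unfold g; rewrite Ropp_involutive; auto).
  destruct (first_zero g (-q) (-p) Hg ltac:(lra) A1 A2) as [e [He [Hz Hpos]]].
  unfold g in Hz, Hpos.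
  exists (- e). split. lra. split. auto.
  intros t Ht. replace t with (- - t) by ring. apply Hpos. lra.
Qed.

Lemma keep_sign f p q x y : continuity f -> (forall t, p <= t <= q -> f t <> 0) ->
  p <= x <= q -> p <= y <= q -> 0 < f x -> 0 < f y.
Proof.
  intros Hc Hnz Hx Hy Hfx.
  destruct (Rlt_dec 0 (f y)) as [P|P]; auto. exfalso.
  assert (f y < 0). { assert (f y <> 0) by (apply Hnz; lra). lra. }
  destruct (Rle_dec x y).
  - destruct (IVT_cor f x y Hc r) as [z [Hz Hfz]]. nra.
    apply (Hnz z); auto; lra.
  - destruct (IVT_cor f y x Hc) as [z [Hz Hfz]]. lra. nra.
    apply (Hnz z); auto; lra.
Qed.

Lemma gron (h : R -> R) (dh : R -> R) K p q : (forall x, is_derive h x (dh x)) -> p <= q ->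
  (forall x, p <= x <= q -> 0 <= h x) ->
  (forall x, p <= x <= q -> Rabs (dh x) <= K * h x) -> (h p = 0 <-> h q = 0).
Proof.
  intros Hd Hpq Hpos Hb. split; intros H0.
  - set (g := fun t => h t * exp (- K * t)).
    assert (g q <= g p).
    { apply (mono_dec g (fun t => dh t * exp (-K*t) + h t * (-K * exp (-K*t)))); auto.
      intros x. unfold g. exact (d_mult h (fun t => exp (-K*t)) x (dh x) (-K * exp (-K*x)) (Hd x) (d_expK (-K) x)).
      intros x Hx. specialize (Hb x Hx). apply Rabs_le_between in Hb.
      assert (0 < exp (-K*x)) by apply exp_pos. nra. }
    unfold g in H. rewrite H0 in H. assert (0 < exp (-K*q)) by apply exp_pos.
    assert (0 <= h q) by (apply Hpos; lra). nra.
  - set (g := fun t => h t * exp (K * t)).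
    assert (g p <= g q).
    { apply (mono g (fun t => dh t * exp (K*t) + h t * (K * exp (K*t)))); auto.
      intros x. unfold g. exact (d_mult h (fun t => exp (K*t)) x (dh x) (K * exp (K*x)) (Hd x) (d_expK K x)).
      intros x Hx. specialize (Hb x Hx). apply Rabs_le_between in Hb.
      assert (0 < exp (K*x)) by apply exp_pos. nra. }
    unfold g in H. rewrite H0 in H. assert (0 < exp (K*p)) by apply exp_pos.
    assert (0 <= h p) by (apply Hpos; lra). nra.
Qed.
Lemma sqp (x : R) : 0 <= x * x.
Proof. pose proof (Rle_0_sqr x); unfold Rsqr in *; lra. Qed.
Lemma ineq_EQ (v A X Y M : R) : Rabs A <= M ->
  Rabs ((-v*X - Y*A/2 + A*Rabs X/2) * X + X * (-v*X - Y*A/2 + A*Rabs X/2)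
        + ((-v*Y - X*A) * Y + Y * (-v*Y - X*A))) <= (2*Rabs v + 4*M)*(X*X+Y*Y).
Proof.
  intros HA. apply Rabs_le_between in HA.
  assert (HM: 0 <= M) by lra.
  pose proof (sqp (X-Y)). pose proof (sqp (X+Y)). pose proof (sqp X). pose proof (sqp Y).
  assert (h1: 0 <= (M-A)*((X-Y)*(X-Y))) by (apply Rmult_le_pos; lra).
  assert (h2: 0 <= (M+A)*((X-Y)*(X-Y))) by (apply Rmult_le_pos; lra).
  assert (h3: 0 <= (M-A)*((X+Y)*(X+Y))) by (apply Rmult_le_pos; lra).
  assert (h4: 0 <= (M+A)*((X+Y)*(X+Y))) by (apply Rmult_le_pos; lra).
  assert (h5: 0 <= (M-A)*(X*X)) by (apply Rmult_le_pos; lra).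
  assert (h6: 0 <= (M+A)*(X*X)) by (apply Rmult_le_pos; lra).
  assert (h7: 0 <= (M-A)*(Y*Y)) by (apply Rmult_le_pos; lra).
  assert (h8: 0 <= (M+A)*(Y*Y)) by (apply Rmult_le_pos; lra).
  apply Rabs_le_between.
  destruct (Rle_dec 0 X); [rewrite (Rabs_right X) by lra | rewrite (Rabs_left X) by lra];
  (destruct (Rle_dec 0 v); [rewrite (Rabs_right v) by lra | rewrite (Rabs_left v) by lra]);
  split; nra.
Qed.

Lemma ineq_A0 (v A X Y : R) : 0 < v -> Rabs A <= 4*v/5 ->
  (-v*X - Y*A/2 + A*Rabs X/2) * X + X * (-v*X - Y*A/2 + A*Rabs X/2)
        + ((-v*Y - X*A) * Y + Y * (-v*Y - X*A)) <= 0.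
Proof.
  intros Hv HA. apply Rabs_le_between in HA. set (M := 4*v/5) in *.
  assert (HM: 0 <= M) by lra.
  pose proof (sqp (X-Y)). pose proof (sqp (X+Y)). pose proof (sqp X). pose proof (sqp Y).
  assert (h1: 0 <= (M-A)*((X-Y)*(X-Y))) by (apply Rmult_le_pos; lra).
  assert (h2: 0 <= (M+A)*((X-Y)*(X-Y))) by (apply Rmult_le_pos; lra).
  assert (h3: 0 <= (M-A)*((X+Y)*(X+Y))) by (apply Rmult_le_pos; lra).
  assert (h4: 0 <= (M+A)*((X+Y)*(X+Y))) by (apply Rmult_le_pos; lra).
  assert (h5: 0 <= (M-A)*(X*X)) by (apply Rmult_le_pos; lra).
  assert (h6: 0 <= (M+A)*(X*X)) by (apply Rmult_le_pos; lra).
  assert (h7: 0 <= (M-A)*(Y*Y)) by (apply Rmult_le_pos; lra).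
  assert (h8: 0 <= (M+A)*(Y*Y)) by (apply Rmult_le_pos; lra).
  unfold M in *.
  destruct (Rle_dec 0 X); [rewrite (Rabs_right X) by lra | rewrite (Rabs_left X) by lra]; nra.
Qed.

Lemma bound f p q : continuity f -> p <= q ->
  exists M, 0 <= M /\ forall t, p <= t <= q -> Rabs (f t) <= M.
Proof.
  intros Hc Hpq.
  destruct (continuity_ab_maj (fun t => Rabs (f t)) p q Hpq) as [m [Hm _]].
  { intros c _. apply (continuity_pt_comp f Rabs). apply Hc. apply Rcontinuity_abs. }
  exists (Rabs (f m)). split. apply Rabs_pos. intros t Ht. apply Hm; auto.
Qed.

Lemma zp f (df : R -> R) K p q : (forall x, is_derive f x (df x)) -> p <= q ->
  (forall x, p <= x <= q -> Rabs (df x) <= K * Rabs (f x)) -> (f p = 0 <-> f q = 0).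
Proof.
  intros Hd Hpq Hb.
  assert (G := gron (fun t => f t * f t) (fun t => df t * f t + f t * df t) (2*K) p q).
  assert (E: forall x, f x * f x = 0 <-> f x = 0).
  { intros x; split; intros H. apply Rmult_integral in H; destruct H; auto. rewrite H; ring. }
  rewrite <- E, <- (E q). apply G; auto.
  - intros x. apply d_mult; apply Hd.
  - intros x _. apply sqp.
  - intros x Hx. specialize (Hb x Hx).
    replace (df x * f x + f x * df x) with (2 * (df x * f x)) by ring.
    rewrite Rabs_mult, Rabs_mult, (Rabs_right 2) by lra.
    assert (f x * f x = Rabs (f x) * Rabs (f x)).
    { rewrite <- Rabs_mult. rewrite Rabs_right; auto. apply Rle_ge, sqp. }
    rewrite H. pose proof (Rabs_pos (f x)). nra.
Qed.

Lemma zp2 f (df : R -> R) K p q x y : (forall x, is_derive f x (df x)) ->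
  (forall x, p <= x <= q -> Rabs (df x) <= K * Rabs (f x)) ->
  p <= x <= q -> p <= y <= q -> f x = 0 -> f y = 0.
Proof.
  intros Hd Hb Hx Hy H0.
  destruct (Rle_dec x y).
  - apply (zp f df K x y Hd); auto. intros; apply Hb; lra.
  - apply (zp f df K y x Hd); auto. lra. intros; apply Hb; lra.
Qed.

Lemma lim_m f l : is_lim f m_infty l -> forall eps, 0 < eps ->
  exists M, forall x, x < M -> Rabs (f x - l) < eps.
Proof.
  intros H eps He. apply is_lim_spec in H. exact (H (mkposreal eps He)).
Qed.

Lemma lim_p f l : is_lim f p_infty l -> forall eps, 0 < eps ->
  exists M, forall x, M < x -> Rabs (f x - l) < eps.
Proof.
  intros H eps He. apply is_lim_spec in H. exact (H (mkposreal eps He)).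
Qed.

Lemma lim_refl_pm f l : is_lim f p_infty l -> is_lim (fun t => f (- t)) m_infty l.
Proof.
  intros H. apply is_lim_spec. apply is_lim_spec in H. intros eps.
  destruct (H eps) as [M HM]. exists (- M). intros x Hx. apply HM. lra.
Qed.

Lemma lim_refl_mp f l : is_lim f m_infty l -> is_lim (fun t => f (- t)) p_infty l.
Proof.
  intros H. apply is_lim_spec. apply is_lim_spec in H. intros eps.
  destruct (H eps) as [M HM]. exists (- M). intros x Hx. apply HM. lra.
Qed.

Lemma lim_opp f x l : is_lim f x l -> is_lim (fun t => - f t) x (- l).
Proof. intros H. exact (is_lim_opp f x l H). Qed.

Lemma lim_uniq f x (l1 l2 : R) : is_lim f x l1 -> is_lim f x l2 -> l1 = l2.
Proof.
  intros H1 H2. apply is_lim_unique in H1. apply is_lim_unique in H2.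
  rewrite H1 in H2. injection H2; auto.
Qed.

Lemma lim_plus f g x (l1 l2 : R) : is_lim f x l1 -> is_lim g x l2 ->
  is_lim (fun t => f t + g t) x (l1 + l2).
Proof. intros; apply is_lim_plus'; auto. Qed.

Lemma lim_mult f g x (l1 l2 : R) : is_lim f x l1 -> is_lim g x l2 ->
  is_lim (fun t => f t * g t) x (l1 * l2).
Proof. intros H1 H2. exact (is_lim_mult f g x l1 l2 H1 H2 I). Qed.

Lemma lim_scal f x k l : is_lim f x l -> is_lim (fun t => k * f t) x (k * l).
Proof. intros H. exact (is_lim_scal_l f k x l H). Qed.

Lemma lim_cst x (c : R) : is_lim (fun _ => c) x c.
Proof. apply is_lim_const. Qed.

Lemma lim_ext f g x (l : R) : (forall t, f t = g t) -> is_lim f x l -> is_lim g x l.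
Proof. apply is_lim_ext. Qed.

Lemma lim_val f x (l l' : R) : is_lim f x l -> l = l' -> is_lim f x l'.
Proof. intros H e; subst; auto. Qed.

Lemma traj_cont v a b r s : trajectory v a b r s ->
  continuity a /\ continuity b /\ continuity r /\ continuity s.
Proof.
  intros Ht. repeat split.
  - apply (cont_of_deriv a r). intros t; apply Ht.
  - apply (cont_of_deriv b s). intros t; apply Ht.
  - apply (cont_of_deriv r (fun t => - v * r t - s t * a t / 2 + a t * Rabs (r t) / 2)). intros t; apply Ht.
  - apply (cont_of_deriv s (fun t => - v * s t - r t * a t)). intros t; apply Ht.
Qed.

Lemma eq_const v a b r s x0 : trajectory v a b r s -> r x0 = 0 -> s x0 = 0 ->
  ~ nonconstant a b r s.
Proof.
  intros Ht Hr0 Hs0 [x [y Hxy]]. apply Hxy.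
  destruct (traj_cont v a b r s Ht) as [Ca _].
  assert (Z : forall t, r t = 0 /\ s t = 0).
  { intros t.
    set (h := fun t => r t * r t + s t * s t).
    set (dh := fun t => (-v*r t - s t*a t/2 + a t*Rabs (r t)/2) * r t + r t * (-v*r t - s t*a t/2 + a t*Rabs (r t)/2) + ((-v*s t - r t*a t) * s t + s t * (-v*s t - r t*a t))).
    assert (Hd : forall x, is_derive h x (dh x)).
    { intros z. destruct (Ht z) as [_ [_ [Hr Hs]]]. unfold h, dh.
      apply d_plus; apply d_mult; auto. }
    set (p := Rmin x0 t). set (q := Rmax x0 t).
    assert (Hpq : p <= q) by apply Rmin_Rmax.
    destruct (bound a p q Ca Hpq) as [M [HM Hb]].
    assert (Hg := gron h dh (2*Rabs v + 4*M) p q Hd Hpq).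
    assert (H1 : forall x, p <= x <= q -> 0 <= h x).
    { intros z _. unfold h. pose proof (sqp (r z)); pose proof (sqp (s z)); lra. }
    assert (H2 : forall x, p <= x <= q -> Rabs (dh x) <= (2*Rabs v + 4*M) * h x).
    { intros z Hz. unfold dh, h. apply ineq_EQ. apply Hb; auto. }
    specialize (Hg H1 H2).
    assert (Hh0 : h x0 = 0) by (unfold h; rewrite Hr0, Hs0; ring).
    assert (Hht : h t = 0).
    { unfold p, q in *. destruct (Rle_dec x0 t).
      - rewrite Rmin_left, Rmax_right in Hg by lra. apply Hg; auto.
      - rewrite Rmin_right, Rmax_left in Hg by lra. apply Hg; auto. }
    unfold h in Hht. pose proof (sqp (r t)); pose proof (sqp (s t)).
    assert (E1 : r t * r t = 0) by lra. assert (E2 : s t * s t = 0) by lra.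
    apply Rmult_integral in E1; apply Rmult_integral in E2. split; tauto. }
  assert (Ha : forall z, is_derive a z 0).
  { intros z. destruct (Ht z) as [H _]. destruct (Z z) as [E _]. rewrite E in H; auto. }
  assert (Hb : forall z, is_derive b z 0).
  { intros z. destruct (Ht z) as [_ [H _]]. destruct (Z z) as [_ E]. rewrite E in H; auto. }
  rewrite (const_of_deriv0 a Ha x y), (const_of_deriv0 b Hb x y).
  destruct (Z x) as [-> ->]. destruct (Z y) as [-> ->]. reflexivity.
Qed.

Lemma u_deriv v a b r s x : trajectory v a b r s ->
  is_derive (fun t => s t - 2 * r t) x
   ((-v * s x - r x * a x) - 2 * (- v * r x - s x * a x / 2 + a x * Rabs (r x) / 2)).
Proof.
  intros Ht. destruct (Ht x) as [_ [_ [Hr Hs]]].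
  apply d_minus; auto. apply d_scal; auto.
Qed.

Lemma w_deriv v a b r s x : trajectory v a b r s ->
  is_derive (fun t => s t + 2 * r t) x
   ((-v * s x - r x * a x) + 2 * (- v * r x - s x * a x / 2 + a x * Rabs (r x) / 2)).
Proof.
  intros Ht. destruct (Ht x) as [_ [_ [Hr Hs]]].
  apply d_plus; auto. apply d_scal; auto.
Qed.

Lemma u_sign v a b r s p q x y : trajectory v a b r s -> p <= q ->
  (forall t, p <= t <= q -> 0 <= r t) -> p <= x <= q -> p <= y <= q ->
  0 < s x - 2 * r x -> 0 < s y - 2 * r y.
Proof.
  intros Ht Hpq Hr Hx Hy Hu.
  destruct (traj_cont v a b r s Ht) as [Ca [_ [Cr Cs]]].
  destruct (bound a p q Ca Hpq) as [M [HM Hb]].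
  set (u := fun t => s t - 2 * r t).
  assert (Cu : continuity u).
  { apply (cont_of_deriv u _ (fun t => u_deriv v a b r s t Ht)). }
  assert (Hbd : forall t, p <= t <= q ->
     Rabs ((-v * s t - r t * a t) - 2 * (- v * r t - s t * a t / 2 + a t * Rabs (r t) / 2))
      <= (M + Rabs v) * Rabs (u t)).
  { intros t Htt. rewrite (Rabs_right (r t)) by (apply Rle_ge, Hr; auto).
    replace ((-v * s t - r t * a t) - 2 * (- v * r t - s t * a t / 2 + a t * r t / 2))
      with ((a t - v) * u t) by (unfold u; cbv beta; field).
    rewrite Rabs_mult. apply Rmult_le_compat_r. apply Rabs_pos.
    unfold Rminus. eapply Rle_trans. apply Rabs_triang. rewrite Rabs_Ropp.
    specialize (Hb t Htt). lra. }
  assert (Hnz : forall t, p <= t <= q -> u t <> 0).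
  { intros t Htt E.
    assert (u x = 0).
    { apply (zp2 u _ (M + Rabs v) p q t x (fun t => u_deriv v a b r s t Ht) Hbd); auto. }
    unfold u in H; lra. }
  exact (keep_sign u p q x y Cu Hnz Hx Hy Hu).
Qed.

Lemma w_zero v a b r s p q x y : trajectory v a b r s -> p <= q ->
  (forall t, p <= t <= q -> r t <= 0) -> p <= x <= q -> p <= y <= q ->
  s x + 2 * r x = 0 -> s y + 2 * r y = 0.
Proof.
  intros Ht Hpq Hr Hx Hy Hw.
  destruct (traj_cont v a b r s Ht) as [Ca [_ [Cr Cs]]].
  destruct (bound a p q Ca Hpq) as [M [HM Hb]].
  set (w := fun t => s t + 2 * r t).
  assert (Hbd : forall t, p <= t <= q ->
     Rabs ((-v * s t - r t * a t) + 2 * (- v * r t - s t * a t / 2 + a t * Rabs (r t) / 2))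
      <= (M + Rabs v) * Rabs (w t)).
  { intros t Htt. rewrite (Rabs_left1 (r t)) by (apply Hr; auto).
    replace ((-v * s t - r t * a t) + 2 * (- v * r t - s t * a t / 2 + a t * - r t / 2))
      with ((- (a t + v)) * w t) by (unfold w; cbv beta; field).
    rewrite Rabs_mult. apply Rmult_le_compat_r. apply Rabs_pos.
    rewrite Rabs_Ropp. eapply Rle_trans. apply Rabs_triang.
    specialize (Hb t Htt). lra. }
  exact (zp2 w _ (M + Rabs v) p q x y (fun t => w_deriv v a b r s t Ht) Hbd Hx Hy Hw).
Qed.

Lemma abs_sq_lt x y : Rabs x < Rabs y -> x * x < y * y.
Proof.
  intros H. pose proof (Rabs_pos x).
  assert (Rabs x * Rabs x < Rabs y * Rabs y) by nra.
  rewrite <- !Rabs_mult in H1. rewrite !Rabs_right in H1 by (apply Rle_ge, sqp). auto.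
Qed.

Lemma dW v a b r s : trajectory v a b r s -> forall z,
  is_derive (fun t => r t * r t + s t * s t) z
  ((-v*r z - s z*a z/2 + a z*Rabs (r z)/2) * r z + r z * (-v*r z - s z*a z/2 + a z*Rabs (r z)/2) + ((-v*s z - r z*a z) * s z + s z * (-v*s z - r z*a z))).
Proof.
  intros Ht z. destruct (Ht z) as [_ [_ [Hr Hs]]]. apply d_plus; apply d_mult; auto.
Qed.

Lemma small_sq x e : Rabs x < e -> e <= 1 -> x * x < e.
Proof.
  intros H He. apply Rabs_def2 in H. destruct H. nra.
Qed.

Lemma a0_zero v a b r s : 0 < v -> trajectory v a b r s ->
  is_lim a m_infty 0 -> is_lim r m_infty 0 -> is_lim s m_infty 0 -> ~ nonconstant a b r s.
Proof.
  intros Hv Ht La Lr Ls.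
  destruct (lim_m a 0 La (4*v/5)) as [T HT]. lra.
  set (h := fun t => r t * r t + s t * s t).
  set (xi := T - 1).
  assert (Hmono : forall t, t <= xi -> h xi <= h t).
  { intros t Ht'. apply (mono_dec h _ t xi (dW v a b r s Ht) Ht').
    intros z Hz. apply ineq_A0; auto. specialize (HT z ltac:(unfold xi in *; lra)).
    rewrite Rminus_0_r in HT. lra. }
  assert (H0 : h xi = 0).
  { destruct (Rle_dec (h xi) 0).
    { unfold h in *. pose proof (sqp (r xi)); pose proof (sqp (s xi)); lra. }
    exfalso. set (e := Rmin 1 (h xi / 4)).
    assert (He : 0 < e) by (unfold e; apply Rmin_pos; lra).
    assert (He1 : e <= 1) by apply Rmin_l.
    assert (He2 : e <= h xi / 4) by apply Rmin_r.
    destruct (lim_m r 0 Lr e He) as [M1 HM1].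
    destruct (lim_m s 0 Ls e He) as [M2 HM2].
    set (t := Rmin xi (Rmin M1 M2) - 1).
    assert (t < xi) by (unfold t; pose proof (Rmin_l xi (Rmin M1 M2)); lra).
    assert (t < M1) by (unfold t; pose proof (Rmin_r xi (Rmin M1 M2)); pose proof (Rmin_l M1 M2); lra).
    assert (t < M2) by (unfold t; pose proof (Rmin_r xi (Rmin M1 M2)); pose proof (Rmin_r M1 M2); lra).
    specialize (HM1 t H0). specialize (HM2 t H1). rewrite Rminus_0_r in HM1, HM2.
    pose proof (small_sq _ _ HM1 He1). pose proof (small_sq _ _ HM2 He1).
    specialize (Hmono t ltac:(lra)). unfold h in Hmono at 2. lra. }
  unfold h in H0. pose proof (sqp (r xi)); pose proof (sqp (s xi)).
  assert (E1 : r xi * r xi = 0) by lra. assert (E2 : s xi * s xi = 0) by lra.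
  apply Rmult_integral in E1; apply Rmult_integral in E2.
  apply (eq_const v a b r s xi Ht); tauto.
Qed.

Lemma core v a b r s (a0 : R) : 0 < v -> trajectory v a b r s -> nonconstant a b r s ->
  is_lim a m_infty a0 -> 0 < a0 -> is_lim r m_infty 0 -> is_lim s m_infty 0 ->
  is_lim a p_infty 0 -> forall t, r t < 0 /\ s t + 2 * r t = 0.
Proof.
  intros Hv Ht Hnc La Ha0 Lr Ls Lap.
  destruct (traj_cont v a b r s Ht) as [Ca [Cb [Cr Cs]]].
  destruct (lim_m a a0 La (a0/2)) as [T1 HT1]. lra.
  set (T0 := T1 - 1).
  assert (Hapos : forall t, t <= T0 -> 0 < a t).
  { intros t Htt. specialize (HT1 t ltac:(unfold T0 in *; lra)). apply Rabs_def2 in HT1. lra. }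
  assert (NEQ : forall t, r t = 0 -> s t = 0 -> False).
  { intros t H1 H2. exact (eq_const v a b r s t Ht H1 H2 Hnc). }
  assert (P1 : forall xi, 0 < a xi -> 0 < r xi -> s xi - 2 * r xi <= 0 -> False).
  { intros xi Ha Hr Hu.
    assert (Hrpos : forall t, xi <= t -> 0 < r t).
    { intros t1 Ht1. destruct (Rlt_dec 0 (r t1)) as [P|P]; auto. exfalso.
      destruct (Req_dec t1 xi) as [E|E]. { subst; lra. }
      destruct (first_zero r xi t1 Cr ltac:(lra) Hr ltac:(lra)) as [eta [Heta [Hz Hpos]]].
      assert (Hr0 : forall z, xi <= z <= eta -> 0 <= r z).
      { intros z Hz'. destruct (Req_dec z eta). subst; lra. left; apply Hpos; lra. }
      assert (Haeta : a xi <= a eta).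
      { apply (mono a r xi eta); [intros; apply Ht | lra | exact Hr0]. }
      assert (Hueta : s eta - 2 * r eta <= 0).
      { destruct (Rle_dec (s eta - 2 * r eta) 0) as [Q|Q]; auto. exfalso.
        assert (0 < s xi - 2 * r xi).
        { apply (u_sign v a b r s xi eta eta xi Ht); try lra. exact Hr0. }
        lra. }
      rewrite Hz in Hueta.
      assert (Hs : s eta < 0).
      { destruct (Req_dec (s eta) 0). exfalso; apply (NEQ eta); auto. lra. }
      destruct (Ht eta) as [_ [_ [Hr' _]]].
      rewrite Hz in Hr'.
      assert (Hl : 0 < - v * 0 - s eta * a eta / 2 + a eta * Rabs 0 / 2).
      { rewrite Rabs_R0. assert (0 < a eta) by lra. nra. }
      destruct (dsign r eta _ Hr' Hl) as [d [Hd Hdd]].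
      set (hh := Rmin (d/2) ((eta - xi)/2)).
      assert (0 < hh) by (unfold hh; apply Rmin_pos; lra).
      assert (hh <= d/2) by apply Rmin_l.
      assert (hh <= (eta - xi)/2) by apply Rmin_r.
      destruct (Hdd hh ltac:(lra)) as [Hq _]. rewrite Hz in Hq.
      assert (0 < r (eta - hh)) by (apply Hpos; lra). lra. }
    destruct (lim_p a 0 Lap (a xi) Ha) as [M HM].
    set (t := Rmax xi M + 1).
    assert (a xi <= a t).
    { apply (mono a r xi t). intros; apply Ht. unfold t; pose proof (Rmax_l xi M); lra.
      intros z Hz; left; apply Hrpos; lra. }
    specialize (HM t ltac:(unfold t; pose proof (Rmax_r xi M); lra)).
    rewrite Rminus_0_r in HM. apply Rabs_def2 in HM. lra. }
  assert (P2 : forall xi, xi <= T0 -> 0 < r xi -> 0 < s xi - 2 * r xi -> False).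
  { intros xi Hxi Hr Hu.
    assert (Hback : forall t, t <= xi -> (forall z, t <= z <= xi -> 0 <= r z) -> r xi <= r t).
    { intros t Htx Hrz.
      apply (mono_dec r (fun z => - v * r z - s z * a z / 2 + a z * Rabs (r z) / 2) t xi); auto.
      intros; apply Ht.
      intros z Hz.
      assert (0 < s z - 2 * r z) by (apply (u_sign v a b r s t xi xi z Ht); auto; lra).
      rewrite Rabs_right by (apply Rle_ge, Hrz; auto).
      assert (0 < a z) by (apply Hapos; lra).
      assert (0 <= r z) by auto.
      nra. }
    assert (Hrpos : forall t, t <= xi -> 0 < r t).
    { intros t Htx. destruct (Rlt_dec 0 (r t)) as [P|P]; auto. exfalso.
      assert (t < xi). { destruct (Req_dec t xi). subst; lra. lra. }
      destruct (last_zero r t xi Cr H ltac:(lra) Hr) as [e [He [Hz Hpos]]].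
      assert (r xi <= r e).
      { apply Hback. lra. intros z Hz'. destruct (Req_dec z e). subst; lra. left; apply Hpos; lra. }
      lra. }
    destruct (lim_m r 0 Lr (r xi) Hr) as [M HM].
    set (t := Rmin xi M - 1).
    assert (r xi <= r t).
    { apply Hback. unfold t; pose proof (Rmin_l xi M); lra.
      intros z Hz; left; apply Hrpos; lra. }
    specialize (HM t ltac:(unfold t; pose proof (Rmin_r xi M); lra)).
    rewrite Rminus_0_r in HM; apply Rabs_def2 in HM. lra. }
  assert (SA : forall t, t <= T0 -> r t <= 0).
  { intros t Htt. destruct (Rle_dec (r t) 0) as [P|P]; auto. exfalso.
    destruct (Rle_dec (s t - 2 * r t) 0).
    - apply (P1 t); auto; lra.
    - apply (P2 t); auto; lra. }
  assert (SB : forall t, t <= T0 -> s t + 2 * r t = 0).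
  { intros xi Hxi.
    set (w := fun t => s t + 2 * r t).
    set (dw := fun t => (-v * s t - r t * a t) + 2 * (- v * r t - s t * a t / 2 + a t * Rabs (r t) / 2)).
    assert (Hdw: forall t, is_derive (fun t => w t * w t) t (dw t * w t + w t * dw t)).
    { intros z. apply d_mult; apply (w_deriv v a b r s z Ht). }
    assert (Hm : forall t, t <= xi -> w xi * w xi <= w t * w t).
    { intros t Htx. apply (mono_dec (fun t => w t * w t) (fun t => dw t * w t + w t * dw t) t xi Hdw Htx).
      intros z Hz.
      assert (E : dw z = - (a z + v) * w z).
      { unfold dw, w. rewrite (Rabs_left1 (r z)) by (apply SA; lra). field. }
      rewrite E. assert (0 < a z) by (apply Hapos; lra). pose proof (sqp (w z)). nra. }
    change (w xi = 0).
    destruct (Req_dec (w xi) 0) as [E|E]; auto. exfalso.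
    assert (Lw : is_lim w m_infty 0).
    { apply (lim_val _ _ (0 + 2*0)). apply lim_plus; auto. apply lim_scal; auto. ring. }
    destruct (lim_m w 0 Lw (Rabs (w xi))) as [M HM]. apply Rabs_pos_lt; auto.
    set (t := Rmin xi M - 1).
    specialize (Hm t ltac:(unfold t; pose proof (Rmin_l xi M); lra)).
    specialize (HM t ltac:(unfold t; pose proof (Rmin_r xi M); lra)).
    rewrite Rminus_0_r in HM. apply abs_sq_lt in HM. lra. }
  assert (SC : forall t, t <= T0 -> r t < 0).
  { intros t Htt. destruct (SA t Htt) as [P|P]; auto. exfalso. apply (NEQ t P).
    pose proof (SB t Htt). lra. }
  assert (SD : forall t, T0 <= t -> r t < 0).
  { intros t1 Ht1. destruct (Rlt_dec (r t1) 0) as [P|P]; auto. exfalso.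
    destruct (Req_dec t1 T0) as [E|E]. { subst. specialize (SC T0 (Rle_refl _)). lra. }
    assert (C' : continuity (fun t => - r t)) by exact (continuity_opp r Cr).
    destruct (first_zero (fun t => - r t) T0 t1 C') as [eta [Heta [Hz Hpos]]].
    - lra.
    - specialize (SC T0 (Rle_refl _)). lra.
    - lra.
    - assert (Hre : r eta = 0) by lra.
      assert (s eta + 2 * r eta = 0).
      { apply (w_zero v a b r s T0 eta T0 eta Ht); try lra.
        intros z Hz'. destruct (Req_dec z eta). subst; lra. specialize (Hpos z ltac:(lra)). lra.
        apply SB; lra. }
      apply (NEQ eta); lra. }
  intros t. destruct (Rle_dec t T0).
  - split. apply SC; auto. apply SB; auto.
  - split. apply SD; lra.
    apply (w_zero v a b r s T0 t T0 t Ht); try lra.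
    intros z Hz. left; apply SD; lra. apply SB; lra.
Qed.

Lemma lim_const_fun f x (c l : R) : (forall t, f t = c) -> is_lim f x l -> c = l.
Proof.
  intros Hc Hl. apply (lim_uniq (fun _ => c) x). apply lim_cst.
  apply (lim_ext f). auto. auto.
Qed.

Lemma lim_quad f x (v l : R) : is_lim f x l ->
  is_lim (fun t => f t * f t / 4 - v * f t) x (l * l / 4 - v * l).
Proof.
  intros H.
  apply (lim_val _ _ (/4 * (l * l) + (-v) * l)); [|field].
  apply (lim_ext (fun t => /4 * (f t * f t) + (-v) * f t)).
  intros t; field.
  apply lim_plus; apply lim_scal; auto. apply lim_mult; auto.
Qed.

Lemma C_const v a b r s : trajectory v a b r s ->
  forall x y, s x + v * b x + a x * a x / 2 = s y + v * b y + a y * a y / 2.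
Proof.
  intros Ht. apply const_of_deriv0. intros z.
  destruct (Ht z) as [Ha [Hb [_ Hs]]].
  apply (d_eq _ _ ((-v * s z - r z * a z) + v * s z + (r z * a z + a z * r z) / 2)).
  - apply d_plus. apply d_plus; auto. apply d_scal; auto.
    apply (d_eq _ _ (/2 * (r z * a z + a z * r z))).
    + apply (d_ext (fun t => /2 * (a t * a t))).
      * intros; field.
      * apply d_scal. apply d_mult; auto.
    + field.
  - field.
Qed.

Lemma final1 v a b r s (a0 b0 : R) : 0 < v -> trajectory v a b r s -> nonconstant a b r s ->
  H1 a b r s a0 b0 -> 0 < a0 -> a0 = 4 * v /\ b0 = -8 * v + 2 /\ forall t, r t < 0.
Proof.
  intros Hv Ht Hnc [[La [Lb [Lr Ls]]] [Lap [Lbp [Lrp Lsp]]]] Ha0.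
  assert (Co := core v a b r s a0 Hv Ht Hnc La Ha0 Lr Ls Lap).
  assert (K1 : forall t, b t + 2 * a t = 2).
  { intros t.
    assert (Hc : forall x y, b x + 2 * a x = b y + 2 * a y).
    { apply const_of_deriv0. intros z. destruct (Ht z) as [Ha [Hb _]].
      apply (d_eq _ _ (s z + 2 * r z)). apply d_plus; auto. apply d_scal; auto.
      apply Co. }
    apply (lim_const_fun (fun t => b t + 2 * a t) p_infty); [intros; apply Hc|].
    apply (lim_val _ _ (2 + 2 * 0)); [|ring]. apply lim_plus; auto. apply lim_scal; auto. }
  assert (K2 : forall t, s t + v * b t + a t * a t / 2 = 2 * v).
  { intros t.
    apply (lim_const_fun (fun t => s t + v * b t + a t * a t / 2) p_infty); [intros; apply C_const with (r := r); auto|].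
    apply (lim_val _ _ (0 + v * 2 + /2 * (0 * 0))); [|field].
    apply (lim_ext (fun t => s t + v * b t + /2 * (a t * a t))). intros; field.
    apply lim_plus. apply lim_plus; auto. apply lim_scal; auto. apply lim_scal. apply lim_mult; auto. }
  assert (K3 : forall t, r t = a t * a t / 4 - v * a t).
  { intros t. specialize (K1 t). specialize (K2 t). destruct (Co t) as [_ E].
    assert (Eb : b t = 2 - 2 * a t) by lra. assert (Es : s t = - 2 * r t) by lra.
    rewrite Eb, Es in K2. nra. }
  assert (Q : a0 * a0 / 4 - v * a0 = 0).
  { apply (lim_uniq (fun t => a t * a t / 4 - v * a t) m_infty). apply lim_quad; auto.
    apply (lim_ext r). auto. auto. }
  assert (Ea : a0 = 4 * v) by nra.
  split; auto. split.
  - assert (Lb2 : is_lim b m_infty (2 - 2 * a0)).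
    { apply (lim_ext (fun t => 2 + (-2) * a t)). intros t; specialize (K1 t); lra.
      apply (lim_val _ _ (2 + (-2) * a0)); [|ring]. apply lim_plus. apply lim_cst. apply lim_scal; auto. }
    assert (b0 = 2 - 2 * a0) by (apply (lim_uniq b m_infty); auto). lra.
  - intros t; apply Co.
Qed.

Lemma d_opp f x l : is_derive f x l -> is_derive (fun t => - f t) x (- l).
Proof. intros H. exact (is_derive_opp f x l H). Qed.

Lemma d_refl2 f x l : is_derive f (- x) l -> is_derive (fun t => f (- t)) x (- l).
Proof.
  intros H. pose proof (d_refl f (- x) l H) as H2. rewrite Ropp_involutive in H2. exact H2.
Qed.

Lemma s1_traj v a b r s : trajectory v a b r s ->
  trajectory v (fun t => - a t) b (fun t => - r t) s.
Proof.
  intros Ht xi. destruct (Ht xi) as [Ha [Hb [Hr Hs]]]. split; [|split; [|split]].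
  - apply d_opp; auto.
  - auto.
  - eapply d_eq. apply d_opp; exact Hr. rewrite Rabs_Ropp. field.
  - eapply d_eq. exact Hs. ring.
Qed.

Lemma s1_nc a b r s : nonconstant a b r s ->
  nonconstant (fun t => - a t) b (fun t => - r t) s.
Proof.
  intros [x [y H]]. exists x, y. intros E. apply H. injection E. intros E4 E3 E2 E1.
  assert (a x = a y) by lra. assert (r x = r y) by lra. rewrite H0, H1, E2, E4. reflexivity.
Qed.

Lemma s1_tends a b r s t (p q : R) : tends_to a b r s t p q ->
  tends_to (fun t => - a t) b (fun t => - r t) s t (- p) q.
Proof.
  intros [La [Lb [Lr Ls]]]. split; [|split; [|split]]; auto.
  - apply lim_opp; auto.
  - apply (lim_val _ _ (- 0)). apply lim_opp; auto. ring.
Qed.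

Lemma s1_H1 a b r s (a0 b0 : R) : H1 a b r s a0 b0 ->
  H1 (fun t => - a t) b (fun t => - r t) s (- a0) b0.
Proof.
  intros [T1 T2]. split. apply s1_tends; auto.
  replace 0 with (- 0) by ring. apply s1_tends; auto.
Qed.

Lemma s2_traj v a b r s : trajectory v a b r s ->
  trajectory (- v) (fun t => - a (- t)) (fun t => - b (- t)) (fun t => r (- t)) (fun t => s (- t)).
Proof.
  intros Ht xi. destruct (Ht (- xi)) as [Ha [Hb [Hr Hs]]]. split; [|split; [|split]].
  - eapply d_eq. apply d_opp. apply d_refl2. exact Ha. ring.
  - eapply d_eq. apply d_opp. apply d_refl2. exact Hb. ring.
  - eapply d_eq. apply d_refl2. exact Hr. field.
  - eapply d_eq. apply d_refl2. exact Hs. ring.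
Qed.

Lemma s2_nc a b r s : nonconstant a b r s ->
  nonconstant (fun t => - a (- t)) (fun t => - b (- t)) (fun t => r (- t)) (fun t => s (- t)).
Proof.
  intros [x [y H]]. exists (- x), (- y). intros E. apply H.
  rewrite !Ropp_involutive in E. injection E. intros E4 E3 E2 E1.
  assert (a x = a y) by lra. assert (b x = b y) by lra. rewrite H0, H1, E3, E4. reflexivity.
Qed.

Lemma s2_tends_pm a b r s (p q : R) : tends_to a b r s p_infty p q ->
  tends_to (fun t => - a (- t)) (fun t => - b (- t)) (fun t => r (- t)) (fun t => s (- t)) m_infty (- p) (- q).
Proof.
  intros [La [Lb [Lr Ls]]]. split; [|split; [|split]].
  - apply lim_opp. apply lim_refl_pm; auto.
  - apply lim_opp. apply lim_refl_pm; auto.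
  - apply lim_refl_pm; auto.
  - apply lim_refl_pm; auto.
Qed.

Lemma s2_tends_mp a b r s (p q : R) : tends_to a b r s m_infty p q ->
  tends_to (fun t => - a (- t)) (fun t => - b (- t)) (fun t => r (- t)) (fun t => s (- t)) p_infty (- p) (- q).
Proof.
  intros [La [Lb [Lr Ls]]]. split; [|split; [|split]].
  - apply lim_opp. apply lim_refl_mp; auto.
  - apply lim_opp. apply lim_refl_mp; auto.
  - apply lim_refl_mp; auto.
  - apply lim_refl_mp; auto.
Qed.

Lemma s2_H1 a b r s (a0 b0 : R) : H1 a b r s a0 b0 ->
  H2 (fun t => - a (- t)) (fun t => - b (- t)) (fun t => r (- t)) (fun t => s (- t)) (- a0) (- b0).
Proof.
  intros [T1 T2]. split.
  - replace 0 with (- 0) by ring. replace (-2) with (- 2) by ring. apply s2_tends_pm; auto.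
  - apply s2_tends_mp; auto.
Qed.

Lemma s2_H2 a b r s (a0 b0 : R) : H2 a b r s a0 b0 ->
  H1 (fun t => - a (- t)) (fun t => - b (- t)) (fun t => r (- t)) (fun t => s (- t)) (- a0) (- b0).
Proof.
  intros [T1 T2]. split.
  - apply s2_tends_pm; auto.
  - replace 0 with (- 0) by ring. replace 2 with (- -2) by ring. apply s2_tends_mp; auto.
Qed.

Lemma v0_const a b r s (am bm ap bp : R) : trajectory 0 a b r s ->
  tends_to a b r s m_infty am bm -> tends_to a b r s p_infty ap bp ->
  (am = 0 \/ ap = 0) -> ~ nonconstant a b r s.
Proof.
  intros Ht [La [Lb [Lr Ls]]] [Lap [Lbp [Lrp Lsp]]] Hz.
  assert (CC := C_const 0 a b r s Ht).
  assert (Lc : forall x, is_lim (fun t => s t + 0 * b t + a t * a t / 2) x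
       (0 + 0 * (match x with m_infty => bm | _ => bp end) + 0) ->
       s 0 + 0 * b 0 + a 0 * a 0 / 2 = 0).
  { intros x H. apply (lim_const_fun _ x _ _ (fun t => CC t 0)) in H. lra. }
  assert (E0 : s 0 + 0 * b 0 + a 0 * a 0 / 2 = 0).
  { destruct Hz as [Hz|Hz]; subst.
    - apply (Lc m_infty).
      apply (lim_val _ _ (0 + 0 * bm + /2 * (0 * 0))); [|field].
      apply (lim_ext (fun t => s t + 0 * b t + /2 * (a t * a t))). intros; field.
      apply lim_plus. apply lim_plus; auto. apply lim_scal; auto. apply lim_scal. apply lim_mult; auto.
    - apply (Lc p_infty).
      apply (lim_val _ _ (0 + 0 * bp + /2 * (0 * 0))); [|field].
      apply (lim_ext (fun t => s t + 0 * b t + /2 * (a t * a t))). intros; field.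
      apply lim_plus. apply lim_plus; auto. apply lim_scal; auto. apply lim_scal. apply lim_mult; auto. }
  assert (Es : forall t, s t = - (a t * a t) / 2).
  { intros t. specialize (CC t 0). lra. }
  set (g := fun t => a t * r t).
  set (dg := fun t => r t * r t + a t * (- 0 * r t - s t * a t / 2 + a t * Rabs (r t) / 2)).
  assert (Hg : forall t, is_derive g t (dg t)).
  { intros t. destruct (Ht t) as [Ha [_ [Hr _]]]. unfold g, dg. apply d_mult; auto. }
  assert (Hdg : forall t, 0 <= dg t).
  { intros t. unfold dg. rewrite Es. pose proof (sqp (r t)). pose proof (sqp (a t)).
    pose proof (Rabs_pos (r t)).
    assert (0 <= (a t * a t) * Rabs (r t)) by (apply Rmult_le_pos; auto).
    assert (0 <= (a t * a t) * (a t * a t)) by (apply Rmult_le_pos; auto).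
    replace (r t * r t + a t * (- 0 * r t - - (a t * a t) / 2 * a t / 2 + a t * Rabs (r t) / 2))
      with (r t * r t + (a t * a t) * (a t * a t) / 4 + (a t * a t) * Rabs (r t) / 2) by field.
    lra. }
  assert (Lgm : is_lim g m_infty 0).
  { apply (lim_val _ _ (am * 0)). apply lim_mult; auto. ring. }
  assert (Lgp : is_lim g p_infty 0).
  { apply (lim_val _ _ (ap * 0)). apply lim_mult; auto. ring. }
  assert (G0 : g 0 = 0).
  { destruct (Rtotal_order (g 0) 0) as [N|[Z|P]]; auto; exfalso.
    - destruct (lim_m g 0 Lgm (- g 0)) as [M HM]. lra.
      set (t := Rmin 0 M - 1).
      assert (g t <= g 0). { apply (mono g dg); [exact Hg | unfold t; pose proof (Rmin_l 0 M); lra | intros; apply Hdg]. }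
      specialize (HM t ltac:(unfold t; pose proof (Rmin_r 0 M); lra)). apply Rabs_def2 in HM. lra.
    - destruct (lim_p g 0 Lgp (g 0)) as [M HM]. lra.
      set (t := Rmax 0 M + 1).
      assert (g 0 <= g t). { apply (mono g dg); [exact Hg | unfold t; pose proof (Rmax_l 0 M); lra | intros; apply Hdg]. }
      specialize (HM t ltac:(unfold t; pose proof (Rmax_r 0 M); lra)). apply Rabs_def2 in HM. lra. }
  assert (Gc : forall t, g t = 0).
  { intros t. destruct (Rle_dec t 0).
    - destruct (Rtotal_order (g t) 0) as [N|[Z|P]]; auto; exfalso.
      + destruct (lim_m g 0 Lgm (- g t)) as [M HM]. lra.
        set (y := Rmin t M - 1).
        assert (g y <= g t). { apply (mono g dg); [exact Hg | unfold y; pose proof (Rmin_l t M); lra | intros; apply Hdg]. }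
        specialize (HM y ltac:(unfold y; pose proof (Rmin_r t M); lra)). apply Rabs_def2 in HM. lra.
      + assert (g t <= g 0) by (apply (mono g dg); [exact Hg | lra | intros; apply Hdg]). lra.
    - destruct (Rtotal_order (g t) 0) as [N|[Z|P]]; auto; exfalso.
      + assert (g 0 <= g t) by (apply (mono g dg); [exact Hg | lra | intros; apply Hdg]). lra.
      + destruct (lim_p g 0 Lgp (g t)) as [M HM]. lra.
        set (y := Rmax t M + 1).
        assert (g t <= g y). { apply (mono g dg); [exact Hg | unfold y; pose proof (Rmax_l t M); lra | intros; apply Hdg]. }
        specialize (HM y ltac:(unfold y; pose proof (Rmax_r t M); lra)). apply Rabs_def2 in HM. lra. }
  assert (D0 : dg 0 = 0).
  { assert (Hc : is_derive g 0 0).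
    { apply (d_ext (fun _ => 0)). intros; symmetry; apply Gc. apply d_const. }
    apply is_derive_unique in Hc. pose proof (is_derive_unique _ _ _ (Hg 0)) as Hc2.
    rewrite Hc in Hc2. auto. }
  unfold dg in D0. rewrite Es in D0.
  pose proof (sqp (r 0)). pose proof (sqp (a 0)). pose proof (Rabs_pos (r 0)).
  assert (0 <= (a 0 * a 0) * Rabs (r 0)) by (apply Rmult_le_pos; auto).
  assert (0 <= (a 0 * a 0) * (a 0 * a 0)) by (apply Rmult_le_pos; auto).
  replace (r 0 * r 0 + a 0 * (- 0 * r 0 - - (a 0 * a 0) / 2 * a 0 / 2 + a 0 * Rabs (r 0) / 2))
    with (r 0 * r 0 + (a 0 * a 0) * (a 0 * a 0) / 4 + (a 0 * a 0) * Rabs (r 0) / 2) in D0 by field.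
  assert (R0 : r 0 * r 0 = 0) by lra. apply Rmult_integral in R0.
  assert (A0 : (a 0 * a 0) * (a 0 * a 0) = 0) by lra.
  apply Rmult_integral in A0. assert (A1 : a 0 * a 0 = 0) by (destruct A0; auto).
  apply (eq_const 0 a b r s 0 Ht). destruct R0; auto.
  rewrite Es, A1. field.
Qed.

Definition ea (v t : R) := 4 * v / (1 + exp (v * t)).

Lemma ea_deriv v t : is_derive (ea v) t (ea v t * ea v t / 4 - v * ea v t).
Proof.
  unfold ea. pose proof (exp_pos (v * t)).
  auto_derive. lra. field. lra.
Qed.

Lemma ea_bounds v t : 0 < v -> 0 < ea v t < 4 * v.
Proof.
  intros Hv. unfold ea. pose proof (exp_pos (v * t)) as He.
  set (q := 4 * v / (1 + exp (v * t))).
  assert (Hq : q * (1 + exp (v * t)) = 4 * v) by (unfold q; field; lra).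
  assert (0 < q). { unfold q. apply Rdiv_lt_0_compat; lra. }
  split; auto. nra.
Qed.

Lemma ea_lim_m v : 0 < v -> is_lim (ea v) m_infty (4 * v).
Proof.
  intros Hv. apply is_lim_spec. intros eps. simpl.
  exists (ln (eps / (4 * v)) / v). intros x Hx.
  pose proof (cond_pos eps) as Heps.
  assert (He : exp (v * x) < eps / (4 * v)).
  { rewrite <- (exp_ln (eps / (4 * v))). apply exp_increasing.
    apply (Rmult_lt_compat_l v) in Hx; auto.
    replace (v * (ln (eps / (4 * v)) / v)) with (ln (eps / (4 * v))) in Hx by (field; lra). lra.
    apply Rdiv_lt_0_compat; lra. }
  assert (He2 : 4 * v * exp (v * x) < eps).
  { apply (Rmult_lt_compat_l (4 * v)) in He; [|lra].
    replace (4 * v * (eps / (4 * v))) with (pos eps) in He by (field; lra). lra. }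
  pose proof (exp_pos (v * x)) as He0.
  unfold ea. set (e := exp (v * x)) in *.
  set (q := 4 * v / (1 + e)).
  assert (Hq : q * (1 + e) = 4 * v) by (unfold q; field; lra).
  assert (0 < q). { unfold q. apply Rdiv_lt_0_compat; lra. }
  apply Rabs_def1; nra.
Qed.

Lemma ea_lim_p v : 0 < v -> is_lim (ea v) p_infty 0.
Proof.
  intros Hv. apply is_lim_spec. intros eps. simpl.
  pose proof (cond_pos eps) as Heps.
  exists (ln (4 * v / eps) / v). intros x Hx.
  assert (He : 4 * v / eps < exp (v * x)).
  { rewrite <- (exp_ln (4 * v / eps)). apply exp_increasing.
    apply (Rmult_lt_compat_l v) in Hx; auto.
    replace (v * (ln (4 * v / eps) / v)) with (ln (4 * v / eps)) in Hx by (field; lra). lra.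
    apply Rdiv_lt_0_compat; lra. }
  assert (He2 : 4 * v < eps * exp (v * x)).
  { apply (Rmult_lt_compat_l eps) in He; [|lra].
    replace (eps * (4 * v / eps)) with (4 * v) in He by (field; lra). lra. }
  pose proof (exp_pos (v * x)) as He0.
  unfold ea. set (e := exp (v * x)) in *.
  set (q := 4 * v / (1 + e)).
  assert (Hq : q * (1 + e) = 4 * v) by (unfold q; field; lra).
  assert (0 < q). { unfold q. apply Rdiv_lt_0_compat; lra. }
  rewrite Rminus_0_r. rewrite Rabs_right by lra. nra.
Qed.

Lemma er_deriv v t : 0 < v ->
  is_derive (fun t => ea v t * ea v t / 4 - v * ea v t) t
    (- v * (ea v t * ea v t / 4 - v * ea v t) - (-2 * (ea v t * ea v t / 4 - v * ea v t)) * ea v t / 2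
     + ea v t * Rabs (ea v t * ea v t / 4 - v * ea v t) / 2).
Proof.
  intros Hv.
  pose proof (ea_bounds v t Hv) as [B1 B2].
  set (R0 := ea v t * ea v t / 4 - v * ea v t).
  assert (HR : R0 < 0) by (unfold R0; nra).
  apply (d_eq _ _ (/4 * (R0 * ea v t + ea v t * R0) - v * R0)).
  - apply (d_ext (fun t => /4 * (ea v t * ea v t) - v * ea v t)). intros; field.
    apply d_minus. apply d_scal. apply d_mult; apply ea_deriv. apply d_scal; apply ea_deriv.
  - rewrite (Rabs_left R0) by auto. field.
Qed.

Lemma explicit v : 0 < v -> exists a b r s : R -> R,
  trajectory v a b r s /\ nonconstant a b r s /\ H1 a b r s (4 * v) (-8 * v + 2).
Proof.
  intros Hv.
  exists (ea v), (fun t => 2 - 2 * ea v t), (fun t => ea v t * ea v t / 4 - v * ea v t),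
    (fun t => -2 * (ea v t * ea v t / 4 - v * ea v t)).
  split; [|split].
  - intros xi. split; [|split; [|split]].
    + apply ea_deriv.
    + apply (d_eq _ _ (0 - 2 * (ea v xi * ea v xi / 4 - v * ea v xi))); [|ring].
      apply d_minus. apply d_const. apply d_scal. apply ea_deriv.
    + apply er_deriv; auto.
    + pose proof (ea_bounds v xi Hv) as [B1 B2].
      apply (d_eq _ _ (-2 * (- v * (ea v xi * ea v xi / 4 - v * ea v xi) - (-2 * (ea v xi * ea v xi / 4 - v * ea v xi)) * ea v xi / 2
     + ea v xi * Rabs (ea v xi * ea v xi / 4 - v * ea v xi) / 2))).
      apply d_scal. apply er_deriv; auto.
      assert (0 < ea v xi * (4*v - ea v xi)) by (apply Rmult_lt_0_compat; lra).
      set (E := ea v xi) in *.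
      assert (E * E / 4 - v * E < 0) by (clear - H; nra).
      rewrite (Rabs_left (E * E / 4 - v * E)) by auto. field.
  - exists 0, 1. intros E. injection E. intros _ _ _ E1.
    unfold ea in E1. rewrite Rmult_0_r, exp_0 in E1.
    assert (Hx : exp 0 < exp (v * 1)) by (apply exp_increasing; lra). rewrite exp_0 in Hx.
    set (e := exp (v * 1)) in *.
    set (q := 4 * v / (1 + e)) in *.
    assert (Hq : q * (1 + e) = 4 * v) by (unfold q; field; lra).
    assert (q = 2 * v) by (rewrite <- E1; field). nra.
  - pose proof (ea_lim_m v Hv) as Lm. pose proof (ea_lim_p v Hv) as Lp.
    split; split; [| split; [|split] | | split; [|split]].
    + auto.
    + apply (lim_ext (fun t => 2 + (-2) * ea v t)). intros; ring.
      apply (lim_val _ _ (2 + (-2) * (4 * v))); [|ring]. apply lim_plus. apply lim_cst. apply lim_scal; auto.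
    + apply (lim_val _ _ ((4 * v) * (4 * v) / 4 - v * (4 * v))); [|field]. apply lim_quad; auto.
    + apply (lim_val _ _ (-2 * ((4 * v) * (4 * v) / 4 - v * (4 * v)))); [|field]. apply lim_scal. apply lim_quad; auto.
    + auto.
    + apply (lim_ext (fun t => 2 + (-2) * ea v t)). intros; ring.
      apply (lim_val _ _ (2 + (-2) * 0)); [|ring]. apply lim_plus. apply lim_cst. apply lim_scal; auto.
    + apply (lim_val _ _ (0 * 0 / 4 - v * 0)); [|field]. apply lim_quad; auto.
    + apply (lim_val _ _ (-2 * (0 * 0 / 4 - v * 0))); [|field]. apply lim_scal. apply lim_quad; auto.
Qed.

Lemma part1 (v : R) : 0 < v ->
     (forall a0 b0 : R,
        (exists a b r s : R -> R,
           trajectory v a b r s /\ nonconstant a b r s /\ H1 a b r s a0 b0)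
        <-> ((a0 = 4 * v /\ b0 = -8 * v + 2) \/ (a0 = -4 * v /\ b0 = -8 * v + 2))) /\
     (forall a b r s : R -> R,
        trajectory v a b r s -> nonconstant a b r s ->
        H1 a b r s (4 * v) (-8 * v + 2) -> forall xi, r xi < 0) /\
     (forall a b r s : R -> R,
        trajectory v a b r s -> nonconstant a b r s ->
        H1 a b r s (-4 * v) (-8 * v + 2) -> forall xi, 0 < r xi) /\
     (forall (a0 b0 : R) (a b r s : R -> R),
        trajectory v a b r s -> H2 a b r s a0 b0 -> ~ nonconstant a b r s).
Proof.
  intros Hv. split; [|split; [|split]].
  - intros a0 b0. split.
    + intros [a [b [r [s [Ht [Hnc Hh]]]]]].
      destruct (Rtotal_order a0 0) as [N|[Z|P]].
      * right. destruct (final1 v _ _ _ _ (- a0) b0 Hv (s1_traj v a b r s Ht) (s1_nc a b r s Hnc)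
                 (s1_H1 a b r s a0 b0 Hh) ltac:(lra)) as [E1 [E2 _]]. split; lra.
      * exfalso. subst. destruct Hh as [[La [_ [Lr Ls]]] _].
        exact (a0_zero v a b r s Hv Ht La Lr Ls Hnc).
      * left. destruct (final1 v a b r s a0 b0 Hv Ht Hnc Hh P) as [E1 [E2 _]]. auto.
    + intros [[-> ->]|[-> ->]].
      * apply explicit; auto.
      * destruct (explicit v Hv) as [a [b [r [s [Ht [Hnc Hh]]]]]].
        exists (fun t => - a t), b, (fun t => - r t), s. split; [|split].
        apply s1_traj; auto. apply s1_nc; auto.
        replace (-4 * v) with (- (4 * v)) by ring. apply s1_H1; auto.
  - intros a b r s Ht Hnc Hh. apply (final1 v a b r s (4*v) (-8*v+2)); auto. lra.
  - intros a b r s Ht Hnc Hh xi.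
    assert (Hh' := s1_H1 a b r s _ _ Hh).
    destruct (final1 v _ _ _ _ _ _ Hv (s1_traj v a b r s Ht) (s1_nc a b r s Hnc) Hh' ltac:(lra))
      as [_ [_ Hr]].
    specialize (Hr xi). lra.
  - intros a0 b0 a b r s Ht [[La [_ [Lr Ls]]] _].
    exact (a0_zero v a b r s Hv Ht La Lr Ls).
Qed.

Theorem theorem5 :
  (* Part 1: v > 0 *)
  (forall v : R, 0 < v ->
     (forall a0 b0 : R,
        (exists a b r s : R -> R,
           trajectory v a b r s /\ nonconstant a b r s /\ H1 a b r s a0 b0)
        <-> ((a0 = 4 * v /\ b0 = -8 * v + 2) \/ (a0 = -4 * v /\ b0 = -8 * v + 2))) /\
     (forall a b r s : R -> R,
        trajectory v a b r s -> nonconstant a b r s ->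
        H1 a b r s (4 * v) (-8 * v + 2) -> forall xi, r xi < 0) /\
     (forall a b r s : R -> R,
        trajectory v a b r s -> nonconstant a b r s ->
        H1 a b r s (-4 * v) (-8 * v + 2) -> forall xi, 0 < r xi) /\
     (forall (a0 b0 : R) (a b r s : R -> R),
        trajectory v a b r s -> H2 a b r s a0 b0 -> ~ nonconstant a b r s)) /\
  (* Part 2: v = 0 *)
  (forall (a b r s : R -> R) (am bm ap bp : R),
     trajectory 0 a b r s ->
     tends_to a b r s m_infty am bm ->
     tends_to a b r s p_infty ap bp ->
     (am = 0 \/ ap = 0) ->
     ~ nonconstant a b r s) /\
  (* Part 3: v < 0 *)
  (forall v : R, v < 0 ->
     (forall a0 b0 : R,
        (exists a b r s : R -> R,
           trajectory v a b r s /\ nonconstant a b r s /\ H2 a b r s a0 b0)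
        <-> ((a0 = 4 * v /\ b0 = -8 * v - 2) \/ (a0 = -4 * v /\ b0 = -8 * v - 2))) /\
     (forall a b r s : R -> R,
        trajectory v a b r s -> nonconstant a b r s ->
        H2 a b r s (4 * v) (-8 * v - 2) -> forall xi, r xi < 0) /\
     (forall a b r s : R -> R,
        trajectory v a b r s -> nonconstant a b r s ->
        H2 a b r s (-4 * v) (-8 * v - 2) -> forall xi, 0 < r xi) /\
     (forall (a0 b0 : R) (a b r s : R -> R),
        trajectory v a b r s -> H1 a b r s a0 b0 -> ~ nonconstant a b r s)).
Proof.
  split; [exact part1|split].
  - intros a b r s am bm ap bp Ht Tm Tp Hz. exact (v0_const a b r s am bm ap bp Ht Tm Tp Hz).
  - intros v Hv.
    destruct (part1 (- v) ltac:(lra)) as [Q1 [Q2 [Q3 Q4]]].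
    split; [|split; [|split]].
    + intros a0 b0. split.
      * intros [a [b [r [s [Ht [Hnc Hh]]]]]].
        assert (Hx : exists a b r s : R -> R,
           trajectory (- v) a b r s /\ nonconstant a b r s /\ H1 a b r s (- a0) (- b0)).
        { eexists; eexists; eexists; eexists. split; [|split].
          apply s2_traj; exact Ht. apply s2_nc; exact Hnc. apply s2_H2; exact Hh. }
        apply Q1 in Hx. destruct Hx as [[E1 E2]|[E1 E2]]; [left|right]; split; lra.
      * intros Hcase.
        assert (Hx : (- a0 = 4 * - v /\ - b0 = -8 * - v + 2) \/ (- a0 = -4 * - v /\ - b0 = -8 * - v + 2)).
        { destruct Hcase as [[E1 E2]|[E1 E2]]; [left|right]; split; lra. }
        apply Q1 in Hx. destruct Hx as [a [b [r [s [Ht [Hnc Hh]]]]]].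
        exists (fun t => - a (- t)), (fun t => - b (- t)), (fun t => r (- t)), (fun t => s (- t)).
        split; [|split].
        -- pose proof (s2_traj _ _ _ _ _ Ht) as H. rewrite Ropp_involutive in H. exact H.
        -- apply s2_nc; auto.
        -- pose proof (s2_H1 _ _ _ _ _ _ Hh) as H. rewrite !Ropp_involutive in H. exact H.
    + intros a b r s Ht Hnc Hh xi.
      pose proof (s2_H2 _ _ _ _ _ _ Hh) as H.
      replace (- (4 * v)) with (4 * - v) in H by ring.
      replace (- (-8 * v - 2)) with (-8 * - v + 2) in H by ring.
      pose proof (Q2 _ _ _ _ (s2_traj _ _ _ _ _ Ht) (s2_nc _ _ _ _ Hnc) H (- xi)) as HR.
      cbv beta in HR. rewrite Ropp_involutive in HR. exact HR.
    + intros a b r s Ht Hnc Hh xi.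
      pose proof (s2_H2 _ _ _ _ _ _ Hh) as H.
      replace (- (-4 * v)) with (-4 * - v) in H by ring.
      replace (- (-8 * v - 2)) with (-8 * - v + 2) in H by ring.
      pose proof (Q3 _ _ _ _ (s2_traj _ _ _ _ _ Ht) (s2_nc _ _ _ _ Hnc) H (- xi)) as HR.
      cbv beta in HR. rewrite Ropp_involutive in HR. exact HR.
    + intros a0 b0 a b r s Ht Hh Hnc.
      exact (Q4 _ _ _ _ _ _ (s2_traj _ _ _ _ _ Ht) (s2_H1 _ _ _ _ _ _ Hh) (s2_nc _ _ _ _ Hnc)).
Qed.
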